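(* The map $\phi:\mathbf G\times\mathcal T\to\mathcal T$ defined, for $X=(A,\beta,B,Q_1,\dots,Q_n)\in\mathbf G$ and $\xi=(P_B,v_B,b_B,T,p_1,\dots,p_n)\in\mathcal T$, by $$\phi(X,\xi):=\Big(P_BP_A,\; v_B+R_Bv_A,\; b_B+\beta,\; P_A^{-1}TB,\; \big(P_BTB\,Q_i^{-1}\,T^{-1}P_B^{-1}(p_i)\big)_{i=1,\dots,n}\Big)$$ is a well-defined transitive right group action of $\mathbf G$ on $\mathcal T$.
   Context: Notation: $\mathrm{SE}(3)$ is the set of pairs $P=(R_P,x_P)$, $R_P\in\mathrm{SO}(3)$, $x_P\in\mathbb R^3$, product $(R_1,x_1)(R_2,x_2)=(R_1R_2,x_1+R_1x_2)$, acting on points by $P(p)=R_Pp+x_P$. $\mathrm{SE}_2(3)$ is the set of triples $A=(R_A,x_A,v_A)$, $R_A\in\mathrm{SO}(3)$, $x_A,v_A\in\mathbb R^3$, product $(R_1,x_1,v_1)(R_2,x_2,v_2)=(R_1R_2,x_1+R_1x_2,v_1+R_1v_2)$; write $P_A:=(R_A,x_A)\in\mathrm{SE}(3)$. $\mathrm{SOT}(3)$ is the group of pairs $Q=(R_Q,c_Q)$, $R_Q\in\mathrm{SO}(3)$, $c_Q>0$, product $(R_1R_2,c_1c_2)$, acting on points by $Q(p):=c_QR_Qp$ (so $Q^{-1}(p)=c_Q^{-1}R_Q^\top p$). Compositions such as $P_BTBQ_i^{-1}T^{-1}P_B^{-1}(p_i)$ mean successive application of these point actions. $\mathbf G:=\mathrm{SE}_2(3)\times\mathbb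 R^6\times\mathrm{SE}(3)\times\mathrm{SOT}(3)^n$ is the direct product group ($\mathbb R^6$ under addition), with elements $X=(A,\beta,B,Q_1,\dots,Q_n)$. State space: a state is $\xi=(P_B,v_B,b_B,T,p_1,\dots,p_n)$ with $P_B=(R_B,x_B)\in\mathrm{SE}(3)$, $v_B\in\mathbb R^3$, $b_B\in\mathbb R^6$, $T\in\mathrm{SE}(3)$, $p_i\in\mathbb R^3$; the total space $\mathcal T$ is the set of such states with $(P_BT)^{-1}(p_i)\ne0$ for all $i$. A right group action satisfies $\phi(XY,\xi)=\phi(Y,\phi(X,\xi))$, $\phi(\mathrm{id},\xi)=\xi$; transitive means every state can be mapped to every other. *)

(* Defs.v *)
From HB Require Import structures.
From mathcomp Require Import all_boot all_order all_algebra.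
From mathcomp Require Import reals.
Set Implicit Arguments. Unset Strict Implicit. Unset Printing Implicit Defensive.
Import Order.TTheory GRing.Theory Num.Theory.
Local Open Scope ring_scope.

Section Defs.
Variable R : realType.
Variable n : nat.

Definition vec3 := 'cV[R]_3.
Definition mat3 := 'M[R]_3.

Definition SO3 (M : mat3) : Prop := M^T *m M = 1%:M /\ \det M = 1.

Definition SE3 := (mat3 * vec3)%type.
Definition se3_mul (P1 P2 : SE3) : SE3 := (P1.1 *m P2.1, P1.2 + P1.1 *m P2.2).
Definition se3_inv (P : SE3) : SE3 := (P.1^T, - (P.1^T *m P.2)).
Definition se3_act (P : SE3) (p : vec3) : vec3 := P.1 *m p + P.2.
Definition se3_id : SE3 := (1%:M, 0).
Definition se3_mem (P : SE3) : Prop := SO3 P.1.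

Definition SE23 := (mat3 * vec3 * vec3)%type.
Definition se23_mul (A1 A2 : SE23) : SE23 :=
  (A1.1.1 *m A2.1.1, A1.1.2 + A1.1.1 *m A2.1.2, A1.2 + A1.1.1 *m A2.2).
Definition se23_id : SE23 := (1%:M, 0, 0).
Definition se23_P (A : SE23) : SE3 := (A.1.1, A.1.2).
Definition se23_mem (A : SE23) : Prop := SO3 A.1.1.

Definition SOT3 := (mat3 * R)%type.
Definition sot_mul (Q1 Q2 : SOT3) : SOT3 := (Q1.1 *m Q2.1, Q1.2 * Q2.2).
Definition sot_id : SOT3 := (1%:M, 1).
Definition sot_act (Q : SOT3) (p : vec3) : vec3 := Q.2 *: (Q.1 *m p).
Definition sot_inv_act (Q : SOT3) (p : vec3) : vec3 := Q.2^-1 *: (Q.1^T *m p).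
Definition sot_mem (Q : SOT3) : Prop := SO3 Q.1 /\ 0 < Q.2.

Record Gel := MkG {
  gA : SE23; gbeta : 'cV[R]_6; gB : SE3; gQ : {ffun 'I_n -> SOT3} }.
Definition G_mul (X Y : Gel) : Gel :=
  MkG (se23_mul (gA X) (gA Y)) (gbeta X + gbeta Y) (se3_mul (gB X) (gB Y))
      [ffun i => sot_mul (gQ X i) (gQ Y i)].
Definition G_id : Gel := MkG se23_id 0 se3_id [ffun _ => sot_id].
Definition G_mem (X : Gel) : Prop :=
  se23_mem (gA X) /\ se3_mem (gB X) /\ forall i, sot_mem (gQ X i).

Record State := MkS {
  sP : SE3; sv : vec3; sb : 'cV[R]_6; sT : SE3; sp : {ffun 'I_n -> vec3} }.

Definition T_mem (xi : State) : Prop :=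
  se3_mem (sP xi) /\ se3_mem (sT xi) /\
  forall i, se3_act (se3_inv (se3_mul (sP xi) (sT xi))) (sp xi i) <> 0.

Definition phi (X : Gel) (xi : State) : State :=
  let PA := se23_P (gA X) in
  MkS (se3_mul (sP xi) PA)
      (sv xi + (sP xi).1 *m (gA X).2)
      (sb xi + gbeta X)
      (se3_mul (se3_mul (se3_inv PA) (sT xi)) (gB X))
      [ffun i => se3_act (sP xi) (se3_act (sT xi) (se3_act (gB X)
                  (sot_inv_act (gQ X i)
                    (se3_act (se3_inv (sT xi)) (se3_act (se3_inv (sP xi)) (sp xi i))))))].

End Defs.

(* Main.v *)
Require Import Defs.
From HB Require Import structures.
From mathcomp Require Import all_boot all_order all_algebra.
From mathcomp Require Import reals ring lra.
Set Implicit Arguments. Unset Strict Implicit. Unset Printing Implicit Defensive.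
Import Order.TTheory GRing.Theory Num.Theory.
Local Open Scope ring_scope.

Definition o0 : 'I_3 := @Ordinal 3 0 isT.
Definition o1 : 'I_3 := @Ordinal 3 1 isT.
Definition o2 : 'I_3 := @Ordinal 3 2 isT.
Definition oo (k : nat) : 'I_3 := match k with 0 => o0 | 1 => o1 | _ => o2 end.

Ltac canon := repeat match goal with
 | |- context[@lift 3 ?a ?b] =>
    let v := eval vm_compute in (nat_of_ord (@lift 3 a b)) in
    let t := eval cbv delta [oo] iota beta in (oo v) in
    rewrite (_ : @lift 3 a b = t); [|by apply: val_inj]
 end; try rewrite (_ : (ord0 : 'I_3) = o0); [|by apply: val_inj].

Lemma det3 (R : comNzRingType) (A : 'M[R]_3) : \det A =
  A o0 o0 * (A o1 o1 * A o2 o2 - A o1 o2 * A o2 o1)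
  - A o0 o1 * (A o1 o0 * A o2 o2 - A o1 o2 * A o2 o0)
  + A o0 o2 * (A o1 o0 * A o2 o1 - A o1 o1 * A o2 o0).
Proof.
rewrite (expand_det_row _ ord0) !big_ord_recl big_ord0 /cofactor.
rewrite !(expand_det_row _ ord0) !big_ord_recl !big_ord0 /cofactor !det_mx11 !mxE /=.
canon. rewrite /bump /=. ring.
Qed.

Lemma ord3P (P : 'I_3 -> Prop) : P o0 -> P o1 -> P o2 -> forall i, P i.
Proof.
move=> h0 h1 h2 [[|[|[|k]]] Hk] //.
- by rewrite (_ : Ordinal Hk = o0) //; apply: val_inj.
- by rewrite (_ : Ordinal Hk = o1) //; apply: val_inj.
- by rewrite (_ : Ordinal Hk = o2) //; apply: val_inj.
Qed.

Lemma vec3_eq (R : Type) (x y : 'cV[R]_3) :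
  x o0 0 = y o0 0 -> x o1 0 = y o1 0 -> x o2 0 = y o2 0 -> x = y.
Proof.
move=> h0 h1 h2; apply/matrixP => i j; rewrite (ord1 j).
by move: i; apply: ord3P.
Qed.

Lemma mat3_eq (R : Type) (x y : 'M[R]_3) :
  x o0 o0 = y o0 o0 -> x o0 o1 = y o0 o1 -> x o0 o2 = y o0 o2 ->
  x o1 o0 = y o1 o0 -> x o1 o1 = y o1 o1 -> x o1 o2 = y o1 o2 ->
  x o2 o0 = y o2 o0 -> x o2 o1 = y o2 o1 -> x o2 o2 = y o2 o2 -> x = y.
Proof.
move=> *; apply/matrixP => i j; move: i j.
by apply: ord3P; apply: ord3P.
Qed.

Section R.
Variable R : realType.
Definition dot (x y : 'cV[R]_3) : R := (x^T *m y) 0 0.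
Lemma dotE x y : dot x y = x o0 0 * y o0 0 + x o1 0 * y o1 0 + x o2 0 * y o2 0.
Proof. rewrite /dot !mxE !big_ord_recl big_ord0 !mxE; canon; ring. Qed.

Definition rot (w : 'cV[R]_3) : 'M[R]_3 :=
  (2 / dot w w) *: (w *m w^T) - 1%:M.

Lemma rotE w i j : rot w i j = 2 / dot w w * (w i 0 * w j 0) - (i == j)%:R.
Proof. by rewrite /rot !mxE big_ord1 !mxE. Qed.

Lemma sq_gt0 (x : R) : x != 0 -> 0 < x * x.
Proof. by move=> h; rewrite -expr2 exprn_even_gt0 //= h. Qed.

Lemma dot_gt0 x : x != 0 -> 0 < dot x x.
Proof.
move=> nz; rewrite dotE.
have : (x o0 0 != 0) || (x o1 0 != 0) || (x o2 0 != 0).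
  apply: contraR nz; rewrite !negb_or !negbK => /andP [/andP [/eqP a /eqP b] /eqP c].
  by apply/eqP; apply: vec3_eq; rewrite ?mxE.
case/orP => [/orP [] | ] h.
- have h' := sq_gt0 h; nra.
- have h' := sq_gt0 h; nra.
- have h' := sq_gt0 h; nra.
Qed.

Lemma rot_SO3 w : w != 0 -> (rot w)^T *m rot w = 1%:M /\ \det (rot w) = 1.
Proof.
move=> nz; have := dot_gt0 nz; rewrite dotE => hs.
have hs' : w o0 0 * w o0 0 + w o1 0 * w o1 0 + w o2 0 * w o2 0 != 0 by rewrite gt_eqF.
split.
  by apply: mat3_eq; rewrite !mxE !big_ord_recl big_ord0 !mxE; canon;
     rewrite !big_ord1 !mxE dotE /=; field.
by rewrite det3 !rotE dotE /=; field.
Qed.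

Lemma rot_apply w a : w != 0 -> rot w *m a = (2 / dot w w * dot w a) *: w - a.
Proof.
move=> nz; have := dot_gt0 nz; rewrite dotE => hs.
have hs' : w o0 0 * w o0 0 + w o1 0 * w o1 0 + w o2 0 * w o2 0 != 0 by rewrite gt_eqF.
by apply: vec3_eq; rewrite !mxE !big_ord_recl big_ord0 !rotE !dotE; canon;
  rewrite /=; field.
Qed.

Definition mk3 (x y z : R) : 'cV[R]_3 :=
  \col_(i < 3) (if i == o0 then x else if i == o1 then y else z).

Lemma mk3_nz x y z : (x != 0) || (y != 0) || (z != 0) -> mk3 x y z != 0.
Proof.
move=> h; apply/eqP => e.
have e0 : mk3 x y z o0 0 = 0 by rewrite e mxE.
have e1 : mk3 x y z o1 0 = 0 by rewrite e mxE.
have e2 : mk3 x y z o2 0 = 0 by rewrite e mxE.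
rewrite !mxE /= in e0 e1 e2.
by move: h; rewrite e0 e1 e2 eqxx.
Qed.

Lemma rot_exists a b : a != 0 -> dot a a = dot b b ->
  exists M : 'M[R]_3, (M^T *m M = 1%:M /\ \det M = 1) /\ M *m a = b.
Proof.
move=> anz H.
have [hab|hab] := eqVneq (a + b) 0.
  have hb : b = - a.
    by apply/eqP; rewrite -addr_eq0 addrC hab.
  have [w [wnz wa]] : exists w, w != 0 /\ dot w a = 0.
    case: (boolP ((a o0 0 != 0) || (a o1 0 != 0))) => h.
      exists (mk3 (- a o1 0) (a o0 0) 0); split.
        apply: mk3_nz; rewrite oppr_eq0; move: h => /orP [] ->; rewrite ?orbT //.
      by rewrite dotE !mxE /=; ring.
    exists (mk3 1 0 0); split; first by apply: mk3_nz; rewrite oner_eq0.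
    move: h; rewrite negb_or !negbK => /andP [/eqP h0 /eqP h1].
    by rewrite dotE !mxE /= h0 h1; ring.
  exists (rot w); split; first exact: rot_SO3.
  by rewrite rot_apply // wa mulr0 scale0r sub0r hb.
exists (rot (a + b)); split; first exact: rot_SO3.
rewrite rot_apply //.
have k : 2 * dot (a + b) a = dot (a + b) (a + b).
  move: H; rewrite !dotE !mxE => H; nra.
have wnz := dot_gt0 hab.
rewrite mulrAC -k mulfV ?scale1r; first by rewrite addrAC subrr add0r.
by rewrite k gt_eqF.
Qed.
End R.

Section G.
Variable R : realType.
Implicit Types (A B : 'M[R]_3) (P Q S : SE3 R).

Lemma SO3_mul A B : SO3 A -> SO3 B -> SO3 (A *m B).
Proof.
move=> [hA dA] [hB dB]; split; last by rewrite det_mulmx dA dB mulr1.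
by rewrite trmx_mul mulmxA -(mulmxA B^T) hA mulmx1 hB.
Qed.

Lemma SO3_r A : SO3 A -> A *m A^T = 1%:M.
Proof. by case=> h _; apply: mulmx1C. Qed.

Lemma SO3_tr A : SO3 A -> SO3 A^T.
Proof. by move=> h; split; [rewrite trmxK; apply: SO3_r | rewrite det_tr; case: h]. Qed.

Lemma se3_mulA P Q S : se3_mul (se3_mul P Q) S = se3_mul P (se3_mul Q S).
Proof.
case: P => p1 p2; case: Q => q1 q2; case: S => s1 s2.
by rewrite /se3_mul /= mulmxA mulmxDr mulmxA addrA.
Qed.

Lemma act_mul P Q p : se3_act (se3_mul P Q) p = se3_act P (se3_act Q p).
Proof.
case: P => p1 p2; case: Q => q1 q2.
rewrite /se3_act /se3_mul /= mulmxDr mulmxA.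
by rewrite addrCA addrC.
Qed.

Lemma act_inv_l P p : SO3 P.1 -> se3_act (se3_inv P) (se3_act P p) = p.
Proof.
case: P => p1 p2 /= [h _]; rewrite /se3_act /se3_inv /=.
by rewrite mulmxDr mulmxA h mul1mx addrK.
Qed.

Lemma act_inv_r P p : SO3 P.1 -> se3_act P (se3_act (se3_inv P) p) = p.
Proof.
case: P => p1 p2 /= h; rewrite /se3_act /se3_inv /=.
by rewrite mulmxDr mulmxA (SO3_r h) mul1mx mulmxN mulmxA (SO3_r h) mul1mx subrK.
Qed.

Lemma inv_mul P Q : SO3 P.1 -> se3_inv (se3_mul P Q) = se3_mul (se3_inv Q) (se3_inv P).
Proof.
case: P => p1 p2; case: Q => q1 q2 /= [h _]; rewrite /se3_inv /se3_mul /=.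
rewrite trmx_mul; congr pair.
rewrite mulmxDr opprD !mulmxN !mulmxA -(mulmxA q1^T p1^T p1) h mulmx1.
by rewrite addrC.
Qed.

Lemma mul_inv_r P : SO3 P.1 -> se3_mul P (se3_inv P) = se3_id R.
Proof.
case: P => p1 p2 /= h; rewrite /se3_inv /se3_mul /se3_id /=.
by rewrite (SO3_r h) mulmxN mulmxA (SO3_r h) mul1mx subrr.
Qed.

Lemma mul_inv_l P : SO3 P.1 -> se3_mul (se3_inv P) P = se3_id R.
Proof.
case: P => p1 p2 /= [h _]; rewrite /se3_inv /se3_mul /se3_id /=.
by rewrite h addrC subrr.
Qed.

Lemma mul_id_l P : se3_mul (se3_id R) P = P.
Proof. by case: P => p1 p2; rewrite /se3_mul /se3_id /= !mul1mx add0r. Qed.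

Lemma mul_id_r P : se3_mul P (se3_id R) = P.
Proof. by case: P => p1 p2; rewrite /se3_mul /se3_id /= mulmx1 mulmx0 addr0. Qed.

Lemma inv_id : se3_inv (se3_id R) = se3_id R.
Proof. by rewrite /se3_inv /se3_id /= trmx1 mul1mx oppr0. Qed.

Lemma act_id p : se3_act (se3_id R) p = p.
Proof. by rewrite /se3_act /se3_id /= mul1mx addr0. Qed.

Lemma sot_inv_mul (Q1 Q2 : SOT3 R) p :
  sot_inv_act (sot_mul Q1 Q2) p = sot_inv_act Q2 (sot_inv_act Q1 p).
Proof.
case: Q1 => r1 c1; case: Q2 => r2 c2; rewrite /sot_inv_act /sot_mul /=.
by rewrite -scalemxAr scalerA trmx_mul mulmxA invfM mulrC.
Qed.

Lemma sot_inv_id p : sot_inv_act (sot_id R) p = p.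
Proof. by rewrite /sot_inv_act /sot_id /= invr1 scale1r trmx1 mul1mx. Qed.

Lemma sot_inv_nz (Q : SOT3 R) u : sot_mem Q -> u != 0 -> sot_inv_act Q u != 0.
Proof.
case: Q => r c [/= h hc] nz; rewrite /sot_inv_act /= scaler_eq0 invr_eq0 gt_eqF //=.
apply: contra nz => /eqP e.
by rewrite -(mul1mx u) -(SO3_r h) -mulmxA e mulmx0.
Qed.


Lemma se3_mem_mul P Q : se3_mem P -> se3_mem Q -> se3_mem (se3_mul P Q).
Proof. exact: SO3_mul. Qed.

Lemma se3_mem_inv P : se3_mem P -> se3_mem (se3_inv P).
Proof. exact: SO3_tr. Qed.

Lemma act_inv_mul P Q p : SO3 P.1 ->
  se3_act (se3_inv Q) (se3_act (se3_inv P) p) = se3_act (se3_inv (se3_mul P Q)) p.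
Proof. by move=> h; rewrite inv_mul // act_mul. Qed.

Lemma key_PT P (A : SE23 R) (T B : SE3 R) : SO3 (se23_P A).1 ->
  se3_mul (se3_mul P (se23_P A)) (se3_mul (se3_mul (se3_inv (se23_P A)) T) B)
  = se3_mul (se3_mul P T) B.
Proof.
move=> h; rewrite !se3_mulA -(se3_mulA (se23_P A)) mul_inv_r // mul_id_l.
by [].
Qed.

Lemma wd (n : nat) (X : Gel R n) (xi : State R n) :
  G_mem X -> T_mem xi -> T_mem (phi X xi).
Proof.
case: X => A beta B Q; case: xi => P v b T p.
move=> [hA [hB hQ]] [hP [hT hp]]; rewrite /phi /T_mem; cbn [sP sv sb sT sp gA gB gbeta gQ] in *.
split; first exact: se3_mem_mul.
split; first by apply: se3_mem_mul => //; apply: se3_mem_mul => //; apply: se3_mem_inv.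
move=> i; rewrite ffunE key_PT //.
have e y : se3_act P (se3_act T (se3_act B y)) = se3_act (se3_mul (se3_mul P T) B) y by rewrite !act_mul.
rewrite e act_inv_l; last by apply: se3_mem_mul => //; apply: se3_mem_mul.
apply/eqP; apply: sot_inv_nz => //.
by rewrite act_inv_mul //; apply/eqP; apply: hp.
Qed.


Lemma act_PTB P (T B : SE3 R) y :
  se3_act P (se3_act T (se3_act B y)) = se3_act (se3_mul (se3_mul P T) B) y.
Proof. by rewrite !act_mul. Qed.

Lemma idl (n : nat) (xi : State R n) : T_mem xi -> phi (G_id R n) xi = xi.
Proof.
case: xi => P v b T p [hP [hT hp]]; cbn [sP sT] in *.
rewrite /phi /G_id; cbn [sP sv sb sT sp gA gB gbeta gQ].
rewrite (_ : se23_P (se23_id R) = se3_id R) // inv_id mul_id_r mul_id_l mul_id_r.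
rewrite /= mulmx0 !addr0; congr MkS.
apply/ffunP => i; rewrite !ffunE act_id sot_inv_id.
by rewrite act_inv_r // act_inv_r.
Qed.

Lemma se23_P_mul (A1 A2 : SE23 R) :
  se23_P (se23_mul A1 A2) = se3_mul (se23_P A1) (se23_P A2).
Proof. by []. Qed.

Lemma comp (n : nat) (X Y : Gel R n) (xi : State R n) :
  G_mem X -> G_mem Y -> T_mem xi -> phi (G_mul X Y) xi = phi Y (phi X xi).
Proof.
case: X => A1 b1 B1 Q1; case: Y => A2 b2 B2 Q2; case: xi => P v b T p.
move=> [hA1 [hB1 hQ1]] [hA2 [hB2 hQ2]] [hP [hT hp]].
cbn [sP sT gA gB gQ] in *.
rewrite /phi /G_mul; cbn [sP sv sb sT sp gA gB gbeta gQ].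
congr MkS.
- by rewrite se23_P_mul se3_mulA.
- by rewrite /= mulmxDr mulmxA addrA.
- by rewrite addrA.
- by rewrite se23_P_mul inv_mul // !se3_mulA.
apply/ffunP => i; rewrite !ffunE.
set P' := se3_mul P (se23_P A1).
set T' := se3_mul (se3_mul (se3_inv (se23_P A1)) T) B1.
have hP' : SO3 P'.1 by apply: se3_mem_mul.
have hPT : se3_mul P' T' = se3_mul (se3_mul P T) B1 by rewrite /P' /T' key_PT.
rewrite (act_inv_mul T' _ hP') hPT (act_PTB P T B1) act_inv_l; last first.
  by apply: se3_mem_mul => //; apply: se3_mem_mul.
by rewrite -(act_mul P' T') hPT sot_inv_mul !act_mul.
Qed.


Lemma sot_exists (u u' : vec3 R) : u != 0 -> u' != 0 ->
  exists Q : SOT3 R, sot_mem Q /\ sot_inv_act Q u = u'.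
Proof.
move=> unz u'nz.
have gu := dot_gt0 unz; have gu' := dot_gt0 u'nz.
set c := Num.sqrt (dot u u) / Num.sqrt (dot u' u').
have cpos : 0 < c by rewrite divr_gt0 // sqrtr_gt0.
have hd : dot (c *: u') (c *: u') = dot u u.
  have -> : dot (c *: u') (c *: u') = c ^+ 2 * dot u' u'.
    by rewrite !dotE !mxE; ring.
  rewrite /c expr_div_n !sqr_sqrtr ?ltW //. rewrite divfK //.
  by rewrite gt_eqF.
have cu'nz : c *: u' != 0 by rewrite scaler_eq0 negb_or gt_eqF.
have [M [[hM dM] eM]] := rot_exists cu'nz hd.
exists (M, c); split; first by split.
rewrite /sot_inv_act /= -eM mulmxA hM mul1mx scalerA mulVf ?scale1r //.
by rewrite gt_eqF.
Qed.

Lemma trans (n : nat) (xi xi' : State R n) : T_mem xi -> T_mem xi' ->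
  exists X : Gel R n, G_mem X /\ phi X xi = xi'.
Proof.
case: xi => P v b T p; case: xi' => P' v' b' T' p'.
move=> [hP [hT hp]] [hP' [hT' hp']]; cbn [sP sT sp] in *.
have hQ : forall i, exists Q : SOT3 R, sot_mem Q /\
   sot_inv_act Q (se3_act (se3_inv (se3_mul P T)) (p i))
   = se3_act (se3_inv (se3_mul P' T')) (p' i).
  by move=> i; apply: sot_exists; apply/eqP; [apply: hp | apply: hp'].
have [Qf HQ] := fin_all_exists hQ.
set PA := se3_mul (se3_inv P) P'.
have hPA : se3_mem PA by apply: se3_mem_mul => //; apply: se3_mem_inv.
set A : SE23 R := (PA.1, PA.2, P.1^T *m (v' - v)).
have eA : se23_P A = PA by exact: (esym (surjective_pairing PA)).
set B := se3_mul (se3_mul (se3_inv T) PA) T'.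
exists (MkG A (b' - b) B [ffun i => Qf i]); split.
  split; first exact: hPA.
  split; last by move=> i; rewrite ffunE; case: (HQ i).
  apply: se3_mem_mul => //; apply: se3_mem_mul => //; exact: se3_mem_inv.
rewrite /phi; cbn [sP sv sb sT sp gA gB gbeta gQ]; rewrite eA.
have ePB : se3_mul (se3_mul P T) B = se3_mul P' T'.
  rewrite /B /PA !se3_mulA -(se3_mulA T) mul_inv_r // mul_id_l.
  by rewrite -(se3_mulA P) mul_inv_r // mul_id_l.
congr MkS.
- by rewrite /PA -se3_mulA mul_inv_r // mul_id_l.
- by rewrite /A /= mulmxA (SO3_r hP) mul1mx addrC subrK.
- by rewrite addrC subrK.
  rewrite /B (se3_mulA (se3_inv PA) T) (se3_mulA (se3_inv T) PA T').
  rewrite -(se3_mulA T (se3_inv T)) mul_inv_r // mul_id_l.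
  by rewrite -(se3_mulA (se3_inv PA)) mul_inv_l // mul_id_l.
apply/ffunP => i; rewrite !ffunE act_PTB ePB act_inv_mul //.
by case: (HQ i) => _ ->; rewrite act_inv_r //; apply: se3_mem_mul.
Qed.

End G.

Theorem lemma2 (R : realType) (n : nat) :
  (* well-defined: phi maps G x T into T *)
  (forall (X : Gel R n) (xi : State R n),
      G_mem X -> T_mem xi -> T_mem (phi X xi)) /\
  (* identity axiom *)
  (forall xi : State R n, T_mem xi -> phi (G_id R n) xi = xi) /\
  (* right action: phi(XY, xi) = phi(Y, phi(X, xi)) *)
  (forall (X Y : Gel R n) (xi : State R n),
      G_mem X -> G_mem Y -> T_mem xi ->
      phi (G_mul X Y) xi = phi Y (phi X xi)) /\
  (* transitivity *)
  (forall xi xi' : State R n, T_mem xi -> T_mem xi' ->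
      exists X : Gel R n, G_mem X /\ phi X xi = xi').
Proof.
split; first exact: wd.
split; first exact: idl.
split; first exact: comp.
exact: trans.
Qed.
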